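(* Let $\k$ be a field, $n\ge3$, and for $1\le i\le n$ let $V^{(i)}$ be the $(n-2)$-dimensional vector space of vectors with zero coordinate sum in $\bigoplus_{j\ne i}\k\,v^{(i)}_j$. Let $S=S^\bullet(V^{(1)}\oplus\cdots\oplus V^{(n)})$ be the polynomial algebra, $\mathbb{Z}^n$-graded with $V^{(i)}$ in degree $e_i$, let $S_{>0}$ be its augmentation ideal, let $J\subset (S_{>0})^2$ be a homogeneous ideal, and let $A=S/J$. Let $A\langle e_1\rangle$ denote the degree-$e_1$ component of $A$ and set $$K=\ker\big(A\otimes A\langle e_1\rangle\to A(e_1)\big),$$ the kernel of multiplication, an $A$-module. Then there is a natural exact sequence of $\mathbb{Z}^n$-graded vector spaces $$\k^{(n-2)(n-3)/2}(-e_1)\to K\otimes_A\k\xrightarrow{f}(J(e_1)\otimes_S\k)_{\ge0}\to0.$$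
   Context: For a graded module $M$ and $d\in\mathbb{Z}^n$, $M(d)$ is the shifted module with $M(d)_c=M_{c+d}$; in $A\otimes A\langle e_1\rangle$ the factor $A\langle e_1\rangle$ is placed in degree $0$, so the multiplication map $A_c\otimes A\langle e_1\rangle\to A_{c+e_1}$ is homogeneous of degree $0$ to $A(e_1)$. $\k^{r}(-e_1)$ denotes an $r$-dimensional space concentrated in degree $e_1$. For a graded space $W$, $W_{\ge0}$ is the sum of its components in degrees $c\in\mathbb{Z}_{\ge0}^n$. *)

(* Defs.v *)
From mathcomp Require Import all_boot all_algebra.
From mathcomp Require Import mpoly.

Set Implicit Arguments.
Unset Strict Implicit.
Unset Printing Implicit Defensive.

Import GRing.Theory.
Local Open Scope ring_scope.

(* S = Sym(V^(1) (+) ... (+) V^(n)), with dim V^(i) = n-2, is modelled  *)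
(* as the polynomial ring in the n*(n-2) variables                      *)
(*    x_(i,a) := 'X_(mxvec_index i a),  i : 'I_n, a : 'I_(n-2),          *)
(* where (x_(i,a))_a is a basis of V^(i) (e.g. v^(i)_j - v^(i)_last).    *)
(* x_(i,a) has Z^n-degree e_i.  The block i = 0 is V^(1), degree e_1.   *)

Definition Spoly (k : fieldType) (n : nat) := {mpoly k[n * (n - 2)]}.

Definition degv (n : nat) := 'I_n -> nat.

Definition mdegi (n : nat) (m : 'X_{1..n * (n - 2)}) (i : 'I_n) : nat :=
  (\sum_(a < n - 2) m (mxvec_index i a))%N.

Definition e1 (n : nat) : degv n := fun i => nat_of_bool (nat_of_ord i == 0%N).
Definition plus_e1 (n : nat) (c : degv n) : degv n := fun i => (c i + e1 i)%N.

(* p is homogeneous of Z^n-degree c (0 is homogeneous of every degree) *)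
Definition zhomog (k : fieldType) (n : nat) (c : degv n) (p : Spoly k n) : bool :=
  all (fun m => [forall i, mdegi m i == c i]) (msupp p).

Definition hcomp (k : fieldType) (n : nat) (c : degv n) (p : Spoly k n) : Spoly k n :=
  \sum_(m <- msupp p | [forall i, mdegi m i == c i]) p@_m *: 'X_[m].

Definition is_hom_ideal (k : fieldType) (n : nat) (J : Spoly k n -> Prop) : Prop :=
  [/\ J 0,
      (forall p q, J p -> J q -> J (p + q)),
      (forall a p, J p -> J (a * p)) &
      (forall c p, J p -> J (hcomp c p))].

(* membership in (S_{>0})^2 : no monomials of total degree 0 or 1 *)
Definition in_aug_sq (k : fieldType) (n : nat) (p : Spoly k n) : Prop :=
  forall m, m \in msupp p -> (1 < mdeg m)%N.

Definition in_aug (k : fieldType) (n : nat) (p : Spoly k n) : Prop :=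
  p@_0%MM = 0.

Definition in_augJ (k : fieldType) (n : nat) (J : Spoly k n -> Prop)
    (p : Spoly k n) : Prop :=
  exists (r : nat) (t q : 'I_r -> Spoly k n),
    (forall l, in_aug (t l) /\ J (q l)) /\ p = \sum_(l < r) t l * q l.

(* A = S/J.  Since J \subset (S_{>0})^2, A<e_1> = S_{e_1} = V^(1) with  *)
(* basis x_(1,a), so A (x) A<e_1> = A^(n-2) and the multiplication map  *)
(* sends (s_a)_a to sum_a s_a x_(1,a).  We work with lifts to S:        *)
(*   mu s     == sum_a s_a x_(1,a)   (lift of the multiplication map)   *)
(*   Ksyz J s <-> s in S^(n-2) lifts an element of K (mu s in J)        *)
(*   Kzero J s <-> s lies in J^(n-2) + S_{>0} Ksyz, i.e. s represents   *)
(*                 0 in K (x)_A k = K / A_{>0} K.                       *)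
(* The map f : K (x)_A k -> J(e_1) (x)_S k = J/S_{>0}J (shifted) is     *)
(*   class of s |-> class of mu s.                                      *)

Definition mu (k : fieldType) (n : nat) (s : 'I_(n - 2) -> Spoly k n) : Spoly k n :=
  \sum_(i < n | nat_of_ord i == 0%N) \sum_(a < n - 2) s a * 'X_(mxvec_index i a).

Definition Ksyz (k : fieldType) (n : nat) (J : Spoly k n -> Prop)
    (s : 'I_(n - 2) -> Spoly k n) : Prop := J (mu s).

Definition Kzero (k : fieldType) (n : nat) (J : Spoly k n -> Prop)
    (s : 'I_(n - 2) -> Spoly k n) : Prop :=
  exists (j : 'I_(n - 2) -> Spoly k n) (r : nat) (t : 'I_r -> Spoly k n)
         (u : 'I_r -> 'I_(n - 2) -> Spoly k n),
    [/\ (forall a, J (j a)),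
        (forall l, in_aug (t l) /\ Ksyz J (u l)) &
        (forall a, s a = j a + \sum_(l < r) t l * u l a)].

Definition zhomog_tuple (k : fieldType) (n : nat) (c : degv n)
    (s : 'I_(n - 2) -> Spoly k n) : Prop := forall a, zhomog c (s a).

(* Main.v *)
Require Import Defs.
From mathcomp Require Import all_boot all_algebra.
From mathcomp Require Import mpoly.
From mathcomp Require Import ring.
Set Implicit Arguments.
Unset Strict Implicit.
Unset Printing Implicit Defensive.
Import GRing.Theory.
Local Open Scope ring_scope.
Section Gen.
Variables (k : fieldType) (nv : nat).
Local Notation P := {mpoly k[nv]}.
Implicit Types (p q : P) (phi : pred 'X_{1..nv}).

Definition Fr phi p := forall m, m \in msupp p -> phi m.

Lemma Fr0 phi : Fr phi 0.
Proof. by move=> m; rewrite mcoeff_msupp mcoeff0 eqxx. Qed.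

Lemma FrD phi p q : Fr phi p -> Fr phi q -> Fr phi (p + q).
Proof. by move=> hp hq m /msuppD_le; rewrite mem_cat => /orP[/hp|/hq]. Qed.

Lemma FrN phi p : Fr phi p -> Fr phi (- p).
Proof. by move=> hp m; rewrite (perm_mem (msuppN _)) => /hp. Qed.

Lemma FrB phi p q : Fr phi p -> Fr phi q -> Fr phi (p - q).
Proof. by move=> hp hq; apply: FrD => //; apply: FrN. Qed.

Lemma FrZ phi c p : Fr phi p -> Fr phi (c *: p).
Proof. by move=> hp m /msuppZ_le /hp. Qed.

Lemma FrX phi m : phi m -> Fr phi 'X_[m].
Proof. by move=> hm m'; rewrite msuppX mem_seq1 => /eqP ->. Qed.

Lemma Fr_sum phi (I : Type) (r : seq I) (Q : pred I) (F : I -> P) :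
  (forall i, Q i -> Fr phi (F i)) -> Fr phi (\sum_(i <- r | Q i) F i).
Proof.
move=> h; elim: r => [|x r ih]; first by rewrite big_nil; apply: Fr0.
rewrite big_cons; case: ifP => // Qx; exact: FrD (h _ Qx) ih.
Qed.

Lemma FrM phi1 phi2 phi3 p q :
  (forall m1 m2, phi1 m1 -> phi2 m2 -> phi3 (m1 + m2)%MM) ->
  Fr phi1 p -> Fr phi2 q -> Fr phi3 (p * q).
Proof.
move=> h hp hq m /msuppM_le /allpairsP [[m1 m2] /= [h1 h2 ->]].
exact: h (hp _ h1) (hq _ h2).
Qed.

Lemma Fr_disj phi p : Fr phi p -> Fr (predC phi) p -> p = 0.
Proof.
move=> h1 h2; case E: (msupp p) => [|m s]; first exact: msuppnil0.
have hm : m \in msupp p by rewrite E mem_head.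
by move: (h1 _ hm) (h2 _ hm) => /= ->.
Qed.

Lemma Fr_weak phi1 phi2 p : (forall m, phi1 m -> phi2 m) -> Fr phi1 p -> Fr phi2 p.
Proof. by move=> h hp m /hp /h. Qed.

Definition proj phi p : P := \sum_(m <- msupp p | phi m) p@_m *: 'X_[m].

Lemma projE phi p m : (proj phi p)@_m = if phi m then p@_m else 0.
Proof.
rewrite /proj raddf_sum /=.
under eq_bigr do rewrite mcoeffZ mcoeffX.
rewrite big_mkcond /=.
case: (boolP (m \in msupp p)) => hm.
  rewrite (bigD1_seq m) //= ?msupp_uniq // eqxx mulr1.
  rewrite big1 ?addr0; first by case: (phi m) => //.
  by move=> m' /negbTE; rewrite eq_sym => ->; rewrite mulr0; case: ifP.
rewrite big1_seq; first by rewrite memN_msupp_eq0 //; case: (phi m).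
move=> m' /andP[_ hm']; case: eqP => [e|_]; last by rewrite mulr0; case: ifP.
by rewrite -e hm' in hm.
Qed.

Lemma proj_Fr phi p : Fr phi (proj phi p).
Proof. by move=> m; rewrite mcoeff_msupp projE; case: (phi m); rewrite ?eqxx. Qed.

Lemma proj_split phi p : p = proj phi p + proj (predC phi) p.
Proof.
by apply/mpolyP => m; rewrite mcoeffD !projE /=; case: (phi m); rewrite ?addr0 ?add0r.
Qed.

Lemma proj_id phi p : Fr phi p -> proj phi p = p.
Proof.
move=> h; apply/mpolyP => m; rewrite projE; case: ifP => // hm.
by rewrite memN_msupp_eq0 //; apply/negP => /h; rewrite hm.
Qed.

End Gen.
Section Dec.
Variables (k : fieldType) (nv : nat).
Local Notation P := {mpoly k[nv]}.

Lemma mnm_addsub (m : 'X_{1..nv}) v : (0 < m v)%N -> (U_(v) + (m - U_(v)))%MM = m.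
Proof.
move=> hv; apply/mnmP => i; rewrite mnmDE mnmBE mnm1E.
by case: eqP => [<-|_]; [rewrite subnKC | rewrite subn0].
Qed.

Lemma dec (K : nat) (f : 'I_K -> 'I_nv) (p : P) :
  Fr (fun m => [exists a, (0 < m (f a))%N]) p ->
  exists h : 'I_K -> P, p = \sum_a 'X_(f a) * h a /\
    forall a m', m' \in msupp (h a) -> (m' + U_(f a))%MM \in msupp p.
Proof.
move=> hp.
pose pk (m : 'X_{1..nv}) := [pick a | (0 < m (f a))%N].
exists (fun a => \sum_(m <- msupp p | pk m == Some a) p@_m *: 'X_[m - U_(f a)]).
split; last first.
  move=> a m' /msupp_sum_le /flatten_mapP [m]; rewrite mem_filter => /andP[ha hm].
  move/msuppZ_le; rewrite msuppX mem_seq1 => /eqP ->.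
  rewrite addmC mnm_addsub //; move: ha; rewrite /pk; case: pickP => // b hb /eqP [<-] //.
transitivity (\sum_a \sum_(m <- msupp p | pk m == Some a) p@_m *: 'X_[m]); last first.
  apply: eq_bigr => a _; rewrite mulr_sumr; apply: eq_bigr => m ha.
  rewrite -scalerAr -mpolyXD mnm_addsub //.
  by move: ha; rewrite /pk; case: pickP => // b hb /eqP [<-].
rewrite (exchange_big_dep xpredT) //=.
rewrite [LHS]mpolyE big_seq_cond [RHS]big_seq_cond; apply: eq_bigr => m /andP[hm _].
have: [exists a, (0 < m (f a))%N] by apply: hp.
case/existsP => a0 ha0.
have [a1 ha1] : exists a1, pk m = Some a1.
  by rewrite /pk; case: pickP => [b _|h]; [exists b | rewrite h in ha0].
by rewrite (big_pred1 a1) // => a; rewrite ha1 /= inj_eq //; exact: Some_inj.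
Qed.

End Dec.
Section Kos.
Variables (k : fieldType) (nv N : nat) (f : 'I_N -> 'I_nv).
Hypothesis finj : injective f.
Local Notation P := {mpoly k[nv]}.

Definition yv (a : 'I_N) : P := 'X_(f a).
Definition kz (a b c : 'I_N) : P :=
  (if c == a then yv b else 0) - (if c == b then yv a else 0).
Definition Mu (s : 'I_N -> P) : P := \sum_c s c * yv c.

Lemma Mu_kz a b : Mu (kz a b) = 0.
Proof.
rewrite /Mu /kz; under eq_bigr do rewrite mulrBl; rewrite sumrB.
rewrite (bigD1 a) //= eqxx big1; last by move=> c /negbTE ->; rewrite mul0r.
rewrite (bigD1 b) //= eqxx [X in _ - (_ + X)]big1; last by move=> c /negbTE ->; rewrite mul0r.
by rewrite !addr0 mulrC subrr.
Qed.

Lemma MuB s t : Mu (fun c => s c - t c) = Mu s - Mu t.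
Proof. by rewrite /Mu -sumrB; apply: eq_bigr => c _; rewrite mulrBl. Qed.

Lemma MuD s t : Mu (fun c => s c + t c) = Mu s + Mu t.
Proof. by rewrite /Mu -big_split; apply: eq_bigr => c _; rewrite mulrDl. Qed.

Lemma Mu_sum (I : Type) (r : seq I) (Q : pred I) (F : I -> 'I_N -> P) :
  Mu (fun c => \sum_(x <- r | Q x) F x c) = \sum_(x <- r | Q x) Mu (F x).
Proof.
rewrite /Mu; under eq_bigr do rewrite mulr_suml.
by rewrite exchange_big.
Qed.

Lemma MuM (g : P) s : Mu (fun c => g * s c) = g * Mu s.
Proof. by rewrite /Mu mulr_sumr; apply: eq_bigr => c _; rewrite mulrA. Qed.

Lemma Mu_kzsum (g : 'I_N -> 'I_N -> P) :
  Mu (fun c => \sum_(i : 'I_N) \sum_(j : 'I_N | (i < j)%N) g i j * kz i j c) = 0.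
Proof.
rewrite Mu_sum big1 // => i _; rewrite Mu_sum big1 // => j _.
by rewrite MuM Mu_kz mulr0.
Qed.

Definition posv v (m : 'X_{1..nv}) := (0 < m v)%N.

Lemma Fr_posM v (p q : P) : Fr (posv v) p -> Fr (posv v) (p * q).
Proof.
move=> hp; have hq : Fr xpredT q by [].
apply: (FrM _ hp hq) => m1 m2 h _; rewrite /posv mnmDE.
exact: leq_trans h (leq_addr _ _).
Qed.

Lemma Fr_negM v (p q : P) : Fr (predC (posv v)) p -> Fr (predC (posv v)) q ->
  Fr (predC (posv v)) (p * q).
Proof.
apply: FrM => m1 m2; rewrite /= /posv mnmDE !lt0n !negbK => /eqP -> /eqP ->.
by [].
Qed.

Lemma yv_neq0 a : yv a != 0.
Proof. by apply/negP => /eqP h; move: (msuppX k (U_(f a))); rewrite /yv in h; rewrite h msupp0. Qed.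

Lemma Fr_single v (q : P) : Fr (posv v) q -> exists g, q = 'X_v * g.
Proof.
move=> hq; have [] := @dec k nv 1 (fun _ => v) q.
  by apply: Fr_weak hq => m hm; apply/existsP; exists ord0.
by move=> h [-> _]; exists (h ord0); rewrite big_ord1.
Qed.

Lemma koszul_aux K : (K <= N)%N -> forall s : 'I_N -> P,
  (forall c : 'I_N, (K <= c)%N -> s c = 0) -> Mu s = 0 ->
  exists g : 'I_N -> 'I_N -> P,
    forall c, s c = \sum_(i : 'I_N) \sum_(j : 'I_N | (i < j)%N) g i j * kz i j c.
Proof.
elim: K => [_|K IH hK] s hs hMu.
  exists (fun _ _ => 0) => c; rewrite hs //.
  by rewrite big1 // => i _; rewrite big1 // => j _; rewrite mul0r.
pose kk : 'I_N := Ordinal hK.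
pose v := f kk.
have /fin_all_exists [g hg] : forall c : 'I_N, exists g0, s c - proj (predC (posv v)) (s c) = 'X_v * g0.
  move=> c; apply: Fr_single.
  have -> : s c - proj (predC (posv v)) (s c) = proj (posv v) (s c).
    by rewrite {1}(proj_split (posv v) (s c)) addrK.
  exact: proj_Fr.
pose s' := fun c => s c - \sum_(a : 'I_N | (a < K)%N) g a * kz a kk c.
have hMu' : Mu s' = 0.
  rewrite /s' MuB hMu Mu_sum big1 ?subrr // => a _.
  by rewrite MuM Mu_kz mulr0.
have hlt : forall c : 'I_N, (c < K)%N -> s' c = proj (predC (posv v)) (s c).
  move=> c hc; rewrite /s' (bigD1 c) //= big1; last first.
    move=> a /andP[ha hac]; rewrite /kz eq_sym (negbTE hac).
    have -> : (c == kk) = false by apply/negbTE; rewrite -val_eqE /= neq_ltn hc.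
    by rewrite subrr mulr0.
  rewrite addr0 /kz eqxx.
  have -> : (c == kk) = false by apply/negbTE; rewrite -val_eqE /= neq_ltn hc.
  rewrite subr0 mulrC /yv -/v -hg.
  by rewrite opprB addrC subrK.
have hgt : forall c : 'I_N, (K < c)%N -> s' c = 0.
  move=> c hc; rewrite /s' hs // big1 ?subrr // => a ha.
  rewrite /kz.
  have -> : (c == a) = false by apply/negbTE; rewrite -val_eqE /= neq_ltn (leq_trans ha (ltnW hc)) orbT.
  have -> : (c == kk) = false by apply/negbTE; rewrite -val_eqE /= neq_ltn hc orbT.
  by rewrite subrr mulr0.
have hkk : s' kk = 0.
  have e : s' kk * yv kk = - \sum_(c : 'I_N | (c < K)%N) proj (predC (posv v)) (s c) * yv c.
    apply/eqP; rewrite -addr_eq0; apply/eqP.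
    rewrite -[RHS]hMu' /Mu [RHS](bigD1 kk) //=; congr (_ + _).
    rewrite [RHS](bigID (fun c : 'I_N => (c < K)%N)) /=.
    rewrite [X in _ = _ + X]big1 ?addr0.
      apply: eq_big => [c|c hc]; last by rewrite hlt.
      case: (ltnP c K) => hc; rewrite ?andbF ?andbT //.
      by rewrite -val_eqE /= neq_ltn hc.
    move=> c /andP[hc1 hc2]; rewrite hgt ?mul0r //.
    rewrite ltn_neqAle leqNgt hc2 andbT eq_sym.
    by move: hc1; rewrite -val_eqE.
  have h1 : Fr (posv v) (s' kk * yv kk).
    rewrite mulrC; apply: Fr_posM; apply: FrX; by rewrite /posv mnm1E eqxx.
  have h2 : Fr (predC (posv v)) (s' kk * yv kk).
    rewrite e; apply: FrN; apply: Fr_sum => c hc; apply: Fr_negM; first exact: proj_Fr.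
    apply: FrX; rewrite /= /posv mnm1E lt0n negbK.
    apply/eqP; case: eqP => // /finj e2; move: hc; rewrite e2 /= ltnn //.
  have /eqP := Fr_disj h1 h2; rewrite mulf_eq0 (negbTE (yv_neq0 _)) orbF.
  by move/eqP.
have [g' hg'] : exists g' : 'I_N -> 'I_N -> P,
    forall c, s' c = \sum_(i : 'I_N) \sum_(j : 'I_N | (i < j)%N) g' i j * kz i j c.
  apply: IH; [exact: ltnW | | exact: hMu'].
  move=> c; rewrite leq_eqVlt => /orP[/eqP e|]; last exact: hgt.
  by have -> : c = kk by apply/val_inj; rewrite /= e.
exists (fun i j => g' i j + (if (j == kk) && (i < K)%N then g i else 0)) => c.
have -> : s c = s' c + \sum_(a : 'I_N | (a < K)%N) g a * kz a kk c by rewrite /s' subrK.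
rewrite hg' [X in _ + X]big_mkcond -big_split /=; apply: eq_bigr => i _.
under [RHS]eq_bigr do rewrite mulrDl.
rewrite big_split /=; congr (_ + _).
case: ifP => hi.
  rewrite (bigD1 kk) /=; last by rewrite /kk /= hi.
  rewrite eqxx big1 ?addr0 // => j /andP[_ /negbTE ->]; by rewrite mul0r.
rewrite big1 // => j _; by rewrite andbF mul0r.
Qed.

Lemma koszul (s : 'I_N -> P) : Mu s = 0 ->
  exists g : 'I_N -> 'I_N -> P,
    forall c, s c = \sum_(i : 'I_N) \sum_(j : 'I_N | (i < j)%N) g i j * kz i j c.
Proof.
move=> h; apply: (@koszul_aux N (leqnn N)) => // c hc.
by move: (ltn_ord c); rewrite ltnNge hc.
Qed.

End Kos.
Section Code.
Variable N : nat.
Definition code (i j : 'I_N) : nat := ('C(j, 2) + i)%N.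

Lemma code_lt (i j : 'I_N) : (i < j)%N -> (code i j < 'C(N, 2))%N.
Proof.
move=> hij; rewrite /code.
apply: (@leq_trans ('C(j.+1, 2))); last exact: leq_bin2l.
by rewrite binS bin1 ltn_add2l.
Qed.

Lemma code_inj_aux (i j i' j' : 'I_N) : (i < j)%N -> (i' < j')%N -> (j < j')%N ->
  code i j != code i' j'.
Proof.
move=> h1 h2 h3; rewrite /code neq_ltn; apply/orP; left.
apply: (@leq_trans ('C(j.+1, 2))); first by rewrite binS bin1 ltn_add2l.
apply: leq_trans (leq_addr _ _); exact: leq_bin2l.
Qed.

Lemma code_inj (i j i' j' : 'I_N) : (i < j)%N -> (i' < j')%N ->
  code i j = code i' j' -> i = i' /\ j = j'.
Proof.
move=> h1 h2 e; case: (ltngtP j j') => hj.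
- by move: (code_inj_aux h1 h2 hj); rewrite e eqxx.
- by move: (code_inj_aux h2 h1 hj); rewrite e eqxx.
- have ej : j = j' by apply: val_inj.
  subst j'; split => //; apply: val_inj; move: e; rewrite /code => /eqP.
  by rewrite eqn_add2l => /eqP.
Qed.

Lemma pairE (R : nmodType) (F : 'I_N -> 'I_N -> R) (Q : 'I_N -> 'I_N -> bool) :
  \sum_(i : 'I_N) \sum_(j : 'I_N | Q i j) F i j =
  \sum_(p : 'I_N * 'I_N | Q p.1 p.2) F p.1 p.2.
Proof. by rewrite pair_big_dep. Qed.

Lemma pair_code (K : fieldType) (V : lmodType K) (r : nat)
  (hr : forall i j : 'I_N, (i < j)%N -> (code i j < r)%N)
  (cf : 'I_N -> 'I_N -> K) (W : 'I_N -> 'I_N -> V) :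
  \sum_(i : 'I_N) \sum_(j : 'I_N | (i < j)%N) cf i j *: W i j =
  \sum_(l < r) (\sum_(i : 'I_N) \sum_(j : 'I_N | (i < j)%N && (code i j == l)) cf i j) *:
                (\sum_(i : 'I_N) \sum_(j : 'I_N | (i < j)%N && (code i j == l)) W i j).
Proof.
rewrite pairE; under [RHS]eq_bigr do rewrite !pairE scaler_suml.
rewrite [RHS](eq_bigr (fun l : 'I_r => \sum_(p : 'I_N * 'I_N | (p.1 < p.2)%N && (code p.1 p.2 == l)) cf p.1 p.2 *: W p.1 p.2)); last first.
  move=> l _; apply: eq_bigr => p /andP[hp /eqP hl].
  rewrite (big_pred1 p) // => p'; apply/andP/eqP => [[hp' /eqP hl']|->]; last by rewrite hp hl.
  case: p' hp' hl' => i' j' /= hp' hl'.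
  case: p hp hl => i j /= hp hl.
  by case: (code_inj hp' hp (etrans hl' (esym hl))) => -> ->.
rewrite /= (exchange_big_dep (fun p : 'I_N * 'I_N => (p.1 < p.2)%N)) /=; last by move=> l p _ /andP[].
apply: eq_bigr => p hp; rewrite (big_pred1 (Ordinal (hr _ _ hp))) // => l.
by rewrite hp /= eq_sym -val_eqE.
Qed.

End Code.
Section Main.
Variables (k : fieldType) (n : nat).
Hypothesis hn : (3 <= n)%N.
Local Notation N := (n - 2)%N.
Local Notation P := (Spoly k n).

Definition i0 : 'I_n := Ordinal (leq_trans (isT : (1 <= 3)%N) hn).
Definition fi (a : 'I_N) : 'I_(n * N) := mxvec_index i0 a.

Lemma mxi_eq (i i' : 'I_n) (a b : 'I_N) :
  (mxvec_index i a == mxvec_index i' b) = (i == i') && (a == b).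
Proof.
apply/eqP/andP => [/cast_ord_inj /enum_rank_inj [-> ->] //|[/eqP -> /eqP ->] //].
Qed.

Lemma fi_inj : injective fi.
Proof. by move=> a b /eqP; rewrite /fi mxi_eq eqxx /= => /eqP. Qed.

Lemma mdegiD (m1 m2 : 'X_{1..n * N}) i :
  mdegi (m1 + m2)%MM i = (mdegi m1 i + mdegi m2 i)%N.
Proof. by rewrite /mdegi -big_split; apply: eq_bigr => a _; rewrite mnmDE. Qed.

Lemma mdegiU a i : mdegi (U_(fi a))%MM i = (i0 == i).
Proof.
rewrite /mdegi; under eq_bigr do rewrite mnm1E /fi mxi_eq.
case: (i0 =P i) => _ /=; last by rewrite big1.
by rewrite (bigD1 a) //= eqxx big1 // => b /negbTE; rewrite eq_sym => ->.
Qed.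

Lemma e1E (i : 'I_n) : e1 i = (i0 == i).
Proof. by rewrite /e1 -val_eqE eq_sym. Qed.

Lemma muE (s : 'I_N -> P) : mu s = Mu fi s.
Proof.
rewrite /mu (big_pred1 i0); last by move=> i; rewrite /= -val_eqE.
by [].
Qed.

Definition phi0 (m : 'X_{1..n * N}) := (0 < mdegi m i0)%N.

Lemma phi0_ex m : phi0 m -> [exists a, (0 < m (fi a))%N].
Proof.
apply: contraLR; rewrite negb_exists => /forallP h.
rewrite /phi0 /mdegi big1 // => a _; move: (h a); rewrite lt0n negbK => /eqP; apply.
Qed.

Lemma Fr_y a : Fr phi0 (yv k fi a).
Proof. by apply: FrX; rewrite /phi0 mdegiU eqxx. Qed.

Lemma Fr_phi0M (p q : P) : Fr phi0 p -> Fr phi0 (p * q).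
Proof.
move=> hp; have hq : Fr xpredT q by [].
apply: (FrM _ hp hq) => m1 m2 h _; rewrite /phi0 mdegiD.
exact: leq_trans h (leq_addr _ _).
Qed.

Lemma Fr_phi0Mr (p q : P) : Fr phi0 q -> Fr phi0 (p * q).
Proof. by move=> h; rewrite mulrC; apply: Fr_phi0M. Qed.

Lemma Fr_nphi0M (p q : P) : Fr (predC phi0) p -> Fr (predC phi0) q ->
  Fr (predC phi0) (p * q).
Proof.
apply: FrM => m1 m2; rewrite /= /phi0 mdegiD !lt0n !negbK => /eqP -> /eqP ->.
by [].
Qed.

Lemma Fr_Mu (s : 'I_N -> P) : Fr phi0 (Mu fi s).
Proof. by apply: Fr_sum => c _; apply: Fr_phi0Mr; apply: Fr_y. Qed.

Lemma zhomogP (d : degv n) (p : P) :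
  zhomog d p <-> Fr (fun m => [forall i, mdegi m i == d i]) p.
Proof. by rewrite /zhomog; split => [/allP|h]; [|apply/allP]. Qed.

Variable J : P -> Prop.
Hypothesis hJ : is_hom_ideal J.

Lemma J0 : J 0. Proof. by case: hJ. Qed.
Lemma JD p q : J p -> J q -> J (p + q). Proof. by case: hJ => _ h _ _; apply: h. Qed.
Lemma JM a p : J p -> J (a * p). Proof. by case: hJ => _ _ h _; apply: h. Qed.
Lemma JN p : J p -> J (- p). Proof. by move=> h; rewrite -mulN1r; apply: JM. Qed.
Lemma JB p q : J p -> J q -> J (p - q). Proof. by move=> h1 h2; apply: JD => //; apply: JN. Qed.
Lemma Jsum (I : Type) (r : seq I) (Q : pred I) (F : I -> P) :
  (forall i, Q i -> J (F i)) -> J (\sum_(i <- r | Q i) F i).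
Proof.
move=> h; elim: r => [|x r ih]; first by rewrite big_nil; apply: J0.
rewrite big_cons; case: ifP => // Qx; exact: JD (h _ Qx) ih.
Qed.

Definition dg (m : 'X_{1..n * N}) : {ffun 'I_n -> nat} := [ffun i => mdegi m i].

Lemma sum_if_uniq (T : eqType) (D : seq T) (x : T) (a : k) :
  uniq D -> \sum_(d <- D) (if x == d then a else 0) = if x \in D then a else 0.
Proof.
elim: D => [|d D ih]; first by rewrite big_nil.
rewrite /= big_cons in_cons => /andP[hd hu]; rewrite ih //.
case: (x =P d) => [->|_] /=; last by rewrite add0r.
by rewrite (negbTE hd) addr0.
Qed.

Lemma J_proj q : J q -> J (proj phi0 q).
Proof.
move=> hq.
pose D := undup [seq dg m | m <- msupp q & phi0 m].
have -> : proj phi0 q = \sum_(d <- D) hcomp (fun i => d i) q.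
  apply/mpolyP => m'; rewrite projE raddf_sum /=.
  have E : forall d : {ffun 'I_n -> nat}, (hcomp (fun i => d i) q)@_m' =
      if dg m' == d then q@_m' else 0.
    move=> d; rewrite /hcomp -/(proj _ q) projE.
    have -> : [forall i, mdegi m' i == d i] = (dg m' == d); last by [].
    apply/forallP/eqP => [h|<- i]; last by rewrite ffunE.
    by apply/ffunP => i; rewrite ffunE; apply/eqP.
  under eq_bigr do rewrite E.
  rewrite sum_if_uniq ?undup_uniq // mem_undup.
  case: (boolP (m' \in msupp q)) => hm; last by rewrite memN_msupp_eq0 //; case: ifP; case: ifP.
  case: ifP => h0.
    by rewrite map_f // mem_filter h0.
  case: ifP => // /mapP [m]; rewrite mem_filter => /andP[hm0 _] e.
  move: h0; rewrite /phi0; have -> : mdegi m' i0 = mdegi m i0.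
    by move: (congr1 (fun F : {ffun 'I_n -> nat} => F i0) e); rewrite /dg !ffunE.
  by move: hm0; rewrite /phi0 => ->.
apply: Jsum => d _; by case: hJ => _ _ _; apply.
Qed.


Lemma ord0_False (l : 'I_0) : False.
Proof. by case: l => m; rewrite ltn0. Qed.

Lemma in_augJ0 : in_augJ J 0.
Proof.
exists 0%N, (fun _ => 0), (fun _ => 0); split; first by move=> l; case: (ord0_False l).
by rewrite big_ord0.
Qed.

Lemma conj1 (c : degv n) (p : P) : zhomog (plus_e1 c) p -> J p ->
  exists s : 'I_N -> P, [/\ zhomog_tuple c s, Ksyz J s & in_augJ J (p - mu s)].
Proof.
move=> /zhomogP hp Jp.
have hp' : Fr (fun m => [exists a, (0 < m (fi a))%N]) p.
  move=> m hm; apply: phi0_ex; move: (hp m hm) => /forallP/(_ i0)/eqP.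
  by rewrite /phi0 => ->; rewrite /plus_e1 e1E eqxx addn1.
have [h [ep hsupp]] := dec hp'.
have emu : mu h = p by rewrite muE ep /Mu; apply: eq_bigr => a _; rewrite mulrC.
exists h; split.
- move=> a; apply/zhomogP => m' hm'; apply/forallP => i.
  move: (hp _ (hsupp _ _ hm')) => /forallP/(_ i).
  by rewrite mdegiD mdegiU /plus_e1 e1E eqn_add2r.
- by rewrite /Ksyz emu.
- by rewrite emu subrr; apply: in_augJ0.
Qed.

Definition rr := ((n - 2) * (n - 3) %/ 2)%N.
Lemma rrE : rr = 'C(N, 2).
Proof. by rewrite /rr bin2 divn2 -subnS. Qed.

Definition w (l : 'I_rr) : 'I_N -> P := fun c =>
  \sum_(i : 'I_N) \sum_(j : 'I_N | (i < j)%N && (code i j == l)) kz k fi i j c.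

Lemma Mu_w l : Mu fi (w l) = 0.
Proof.
rewrite /w (Mu_sum fi (index_enum _) xpredT (fun (i : 'I_N) c => \sum_(j : 'I_N | (i < j)%N && (code i j == l)) kz k fi i j c)).
rewrite big1 // => i _.
rewrite (Mu_sum fi (index_enum _) _ (fun j c => kz k fi i j c)).
by rewrite big1 // => j _; apply: Mu_kz.
Qed.

Lemma w_props l :
  [/\ zhomog_tuple (@e1 n) (w l), Ksyz J (w l) & in_augJ J (mu (w l))].
Proof.
split.
- move=> c; apply/zhomogP; apply: Fr_sum => i _; apply: Fr_sum => j _.
  rewrite /kz; apply: FrB; (case: ifP => _; [apply: FrX; apply/forallP => i1; by rewrite mdegiU e1E | exact: Fr0]).
- by rewrite /Ksyz muE Mu_w; apply: J0.
- by rewrite muE Mu_w; apply: in_augJ0.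
Qed.

Definition AK (v : 'I_N -> P) := exists (r : nat) (t : 'I_r -> P) (u : 'I_r -> 'I_N -> P),
  (forall l, in_aug (t l) /\ Ksyz J (u l)) /\ (forall a, v a = \sum_(l < r) t l * u l a).

Lemma AK_ext v1 v2 : (forall a, v1 a = v2 a) -> AK v1 -> AK v2.
Proof. by move=> e [r [t [u [h1 h2]]]]; exists r, t, u; split => // a; rewrite -e. Qed.

Lemma AK0 : AK (fun _ => 0).
Proof.
exists 0%N, (fun _ => 0), (fun _ _ => 0); split; first by move=> l; case: (ord0_False l).
by move=> a; rewrite big_ord0.
Qed.

Lemma AK1 t u : in_aug t -> Ksyz J u -> AK (fun a => t * u a).
Proof.
move=> h1 h2; exists 1%N, (fun _ => t), (fun _ => u); split => // a.
by rewrite big_ord1.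
Qed.

Lemma AKD v1 v2 : AK v1 -> AK v2 -> AK (fun a => v1 a + v2 a).
Proof.
move=> [r1 [t1 [u1 [h1 e1']]]] [r2 [t2 [u2 [h2 e2]]]].
exists (r1 + r2)%N, (fun l => match split l with inl x => t1 x | inr y => t2 y end),
  (fun l => match split l with inl x => u1 x | inr y => u2 y end); split.
  by move=> l; case: (split l).
move=> a; rewrite big_split_ord e1' e2.
have sl : forall x : 'I_r1, split (lshift r2 x) = inl x by move=> x; apply: (unsplitK (inl x)).
have sr : forall x : 'I_r2, split (rshift r1 x) = inr x by move=> x; apply: (unsplitK (inr x)).
by congr (_ + _); apply: eq_bigr => x _; rewrite ?sl ?sr.
Qed.

Lemma AKsum (I : Type) (r : seq I) (Q : pred I) (F : I -> 'I_N -> P) :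
  (forall i, Q i -> AK (F i)) -> AK (fun a => \sum_(i <- r | Q i) F i a).
Proof.
move=> h; elim: r => [|x r ih].
  by apply: AK_ext AK0 => a; rewrite big_nil.
case Qx: (Q x).
  by apply: AK_ext (AKD (h _ Qx) ih) => a; rewrite big_cons Qx.
by apply: AK_ext ih => a; rewrite big_cons Qx.
Qed.

Lemma MuMr (s : 'I_N -> P) (g : P) : Mu fi (fun c => s c * g) = Mu fi s * g.
Proof. by rewrite /Mu mulr_suml; apply: eq_bigr => c _; rewrite mulrAC. Qed.

Lemma conj2 (s : 'I_N -> P) : in_augJ J (mu s) ->
  exists lam : 'I_rr -> k, Kzero J (fun a => s a - \sum_l lam l *: w l a).
Proof.
move=> [r0 [t [q [htq es]]]].
rewrite muE in es.
have hJq l : J (q l) by case: (htq l).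
have ht l : in_aug (t l) by case: (htq l).
pose q1 l := proj phi0 (q l).
pose q2 l := proj (predC phi0) (q l).
have Jq1 l : J (q1 l) by apply: J_proj.
have eql l : q l = q1 l + q2 l by apply: proj_split.
have Jq2 l : J (q2 l).
  have -> : q2 l = q l - q1 l by rewrite eql addrC addKr.
  by apply: JB.
have /fin_all_exists [sig hsig] : forall l : 'I_r0, exists s0 : 'I_N -> P, q1 l = Mu fi s0.
  move=> l.
  have [h [e _]] := dec (Fr_weak (fun m => @phi0_ex m) (@proj_Fr _ _ phi0 (q l))).
  by exists h; rewrite /q1 e /Mu; apply: eq_bigr => a _; rewrite mulrC.
pose t1 l := proj phi0 (t l).
pose t2 l := proj (predC phi0) (t l).
have /fin_all_exists [bet hbet] : forall l : 'I_r0, exists s0 : 'I_N -> P, t1 l = Mu fi s0.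
  move=> l.
  have [h [e _]] := dec (Fr_weak (fun m => @phi0_ex m) (@proj_Fr _ _ phi0 (t l))).
  by exists h; rewrite /t1 e /Mu; apply: eq_bigr => a _; rewrite mulrC.
have etq l : t l * q l = t l * q1 l + t1 l * q2 l + t2 l * q2 l.
  rewrite {1}(eql l) mulrDr -addrA; congr (_ + _); rewrite -mulrDl; congr (_ * _).
  exact: proj_split.
have es' : Mu fi s = \sum_l t l * q1 l + \sum_l t1 l * q2 l + \sum_l t2 l * q2 l.
  by rewrite es; under eq_bigr do rewrite etq; rewrite !big_split.
have Z : \sum_l t2 l * q2 l = 0.
  apply: (@Fr_disj _ _ phi0).
    have -> : \sum_l t2 l * q2 l = Mu fi s - \sum_l t l * q1 l - \sum_l t1 l * q2 l.
      by rewrite es'; ring.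
    apply: FrB; first apply: FrB.
    - exact: Fr_Mu.
    - by apply: Fr_sum => l _; apply: Fr_phi0Mr; apply: proj_Fr.
    - by apply: Fr_sum => l _; apply: Fr_phi0M; apply: proj_Fr.
  by apply: Fr_sum => l _; apply: Fr_nphi0M; apply: proj_Fr.
rewrite Z addr0 in es'.
pose jv a := \sum_l bet l a * q2 l.
have Jj a : J (jv a) by apply: Jsum => l _; apply: JM.
pose sres a := s a - jv a - \sum_l t l * sig l a.
have Mres : Mu fi sres = 0.
  have E1 : Mu fi jv = \sum_l t1 l * q2 l.
    rewrite /jv (Mu_sum fi (index_enum _) xpredT (fun l a => bet l a * q2 l)).
    by apply: eq_bigr => l _; rewrite MuMr hbet.
  have E2 : Mu fi (fun a => \sum_l t l * sig l a) = \sum_l t l * q1 l.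
    rewrite (Mu_sum fi (index_enum _) xpredT (fun l a => t l * sig l a)).
    by apply: eq_bigr => l _; rewrite MuM hsig.
  rewrite /sres (MuB fi (fun a => s a - jv a)) (MuB fi s jv) E1 E2 es'.
  ring.
have [g hg] := koszul (@fi_inj) Mres.
pose cf i j := (g i j)@_0.
exists (fun l : 'I_rr => \sum_(i : 'I_N) \sum_(j : 'I_N | (i < j)%N && (code i j == l)) cf i j).
have hr : forall i j : 'I_N, (i < j)%N -> (code i j < rr)%N.
  by move=> i j hij; rewrite rrE; apply: code_lt.
have hAK : AK (fun a => (s a - \sum_(l : 'I_rr) (\sum_(i : 'I_N) \sum_(j : 'I_N | (i < j)%N && (code i j == l)) cf i j) *: w l a) - jv a).
  apply: (@AK_ext (fun a => \sum_l t l * sig l a + \sum_(i : 'I_N) \sum_(j : 'I_N | (i < j)%N) (g i j - (cf i j)%:MP) * kz k fi i j a)).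
    move=> a.
    have ew := pair_code hr cf (fun i j => kz k fi i j a).
    rewrite /w.
    have -> : \sum_(l < rr) (\sum_(i : 'I_N) \sum_(j : 'I_N | (i < j)%N && (code i j == l)) cf i j) *:
        (\sum_(i : 'I_N) \sum_(j : 'I_N | (i < j)%N && (code i j == l)) kz k fi i j a) =
        \sum_(i : 'I_N) \sum_(j : 'I_N | (i < j)%N) cf i j *: kz k fi i j a by rewrite ew.
    have : sres a = \sum_(i : 'I_N) \sum_(j : 'I_N | (i < j)%N) g i j * kz k fi i j a by apply: hg.
    rewrite /sres => e.
    have -> : s a = \sum_(i : 'I_N) \sum_(j : 'I_N | (i < j)%N) g i j * kz k fi i j a + jv a + \sum_l t l * sig l a.
      by rewrite -e /sres; ring.
    have -> : \sum_(i : 'I_N) \sum_(j : 'I_N | (i < j)%N) g i j * kz k fi i j a =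
       \sum_(i : 'I_N) \sum_(j : 'I_N | (i < j)%N) (g i j - (cf i j)%:MP) * kz k fi i j a +
       \sum_(i : 'I_N) \sum_(j : 'I_N | (i < j)%N) cf i j *: kz k fi i j a.
      rewrite -big_split /=; apply: eq_bigr => i _; rewrite -big_split /=; apply: eq_bigr => j _.
      by rewrite mulrBl -mul_mpolyC subrK.
    set A := \sum_(i : 'I_N) \sum_(j : 'I_N | (i < j)%N) (g i j - (cf i j)%:MP) * kz k fi i j a.
    set B := \sum_(i : 'I_N) \sum_(j : 'I_N | (i < j)%N) cf i j *: kz k fi i j a.
    set C := \sum_l t l * sig l a.
    set D := jv a.
    ring.
  apply: AKD.
    apply: AKsum => l _; apply: AK1 => //.
    by rewrite /Ksyz muE -hsig.
  apply: AKsum => i _; apply: AKsum => j _; apply: AK1.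
    by rewrite /in_aug mcoeffB mcoeffC eqxx mulr1 subrr.
  by rewrite /Ksyz muE Mu_kz; apply: J0.
case: hAK => r [tt [u [h1 h2]]].
exists jv, r, tt, u; split => // a.
by rewrite -h2 /=; ring.
Qed.

End Main.

Theorem lemma4p1 (k : fieldType) (n : nat) (hn : (3 <= n)%N)
    (J : Spoly k n -> Prop)
    (hJ : is_hom_ideal J) (hJ2 : forall p, J p -> in_aug_sq p) :
  (forall (c : degv n) (p : Spoly k n),
      zhomog (plus_e1 c) p -> J p ->
      exists s : 'I_(n - 2) -> Spoly k n,
        [/\ zhomog_tuple c s, Ksyz J s & in_augJ J (p - mu s)])
  /\
  exists w : 'I_((n - 2) * (n - 3) %/ 2) -> 'I_(n - 2) -> Spoly k n,
    (forall l, [/\ zhomog_tuple (@e1 n) (w l), Ksyz J (w l) & in_augJ J (mu (w l))])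
    /\
    (forall (c : degv n) (s : 'I_(n - 2) -> Spoly k n),
        zhomog_tuple c s -> Ksyz J s -> in_augJ J (mu s) ->
        exists lam : 'I_((n - 2) * (n - 3) %/ 2) -> k,
          Kzero J (fun a => s a - \sum_l lam l *: w l a)).
Proof.
split; first by move=> c p; apply: conj1.
exists (@w k n hn); split; first by move=> l; apply: w_props.
by move=> c s _ _ h; apply: conj2.
Qed.
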